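(* Let $G$ be a graph that contains an induced $(n,m)$-necklace with $n\ge 5$ and $m\ge 1$ whose cycle has good neighbours in $G$. Then either $KB_e^2(G)$ or $KB_e^3(G)$ contains an induced $(n,m')$-necklace with $m'>m$ whose cycle has good neighbours (in $KB_e^2(G)$, resp. $KB_e^3(G)$).
   Context: All graphs are finite, simple and undirected. A biclique of a graph $G$ is a maximal (with respect to inclusion) induced subgraph of $G$ that is a complete bipartite graph $K_{p,q}$ with $p,q\ge 1$. The edge-biclique graph $KB_e(G)$ has one vertex for each biclique of $G$, two distinct vertices being adjacent iff the corresponding bicliques share at least one edge; $KB_e^0(G)=G$, $KB_e^k(G)=KB_e(KB_e^{k-1}(G))$. For $n\ge3$, $m\ge1$, the $(n,m)$-necklace is the graph on $n+m$ vertices consisting of an induced cycle $C_n$ and a complete graph $K_m$ such that, for one fixed edge $xy$ of the cycle, every vertex of the $K_m$ is adjacent to $x$ and $y$ and to no other vertex of the cycle. An induced cycle $C=v_0\ldots v_{n-1}$ ($n\ge5$) of a graph $H$ has good neighbours in $H$ if for every vertex $v\in V(H)\setminus V(C)$ and every $i$ (indices mod $n$), $\{v_{i-1},v_{i+1}\}\subseteq N(v)$ implies $v_i\in N(v)$. *)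

(* Defs.v *)
From mathcomp Require Import all_boot.
Set Implicit Arguments. Unset Strict Implicit. Unset Printing Implicit Defensive.

Record sgraph := SGraph {
  vert :> finType;
  adj : rel vert;
  adj_sym : symmetric adj;
  adj_irr : irreflexive adj }.

Arguments adj {s}.

Section Bicliques.
Variable G : sgraph.

Definition is_cbip (S : {set G}) : bool :=
  [exists X : {set G},
    [&& X \subset S, X != set0, S :\: X != set0,
        [forall x in X, forall y in X, ~~ adj x y],
        [forall x in S :\: X, forall y in S :\: X, ~~ adj x y] &
        [forall x in X, forall y in S :\: X, adj x y]]].

Definition is_biclique (S : {set G}) : bool :=
  is_cbip S && [forall T : {set G}, (S \subset T) && is_cbip T ==> (T == S)].

Definition biclique := {S : {set G} | is_biclique S}.

Definition kb_adj (B1 B2 : biclique) : bool :=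
  (B1 != B2) &&
  [exists u : G, exists v : G,
     [&& adj u v, u \in val B1 :&: val B2 & v \in val B1 :&: val B2]].

Lemma kb_adj_sym : symmetric kb_adj.
Proof. by move=> B1 B2; rewrite /kb_adj eq_sym setIC. Qed.

Lemma kb_adj_irr : irreflexive kb_adj.
Proof. by move=> B; rewrite /kb_adj eqxx. Qed.

End Bicliques.

Definition KBe (G : sgraph) : sgraph :=
  @SGraph (biclique G) (@kb_adj G) (@kb_adj_sym G) (@kb_adj_irr G).

Fixpoint KBe_iter (k : nat) (G : sgraph) : sgraph :=
  match k with 0 => G | k'.+1 => KBe (KBe_iter k' G) end.

(* (n,m)-necklace induced in H: cycle vertices c 0, ..., c (n-1) (indices mod n),
   clique vertices k 0, ..., k (m-1); the fixed cycle edge is x = c 0, y = c 1. *)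
Definition is_necklace (H : sgraph) (n m : nat) (c k : nat -> H) : Prop :=
  3 <= n /\ 1 <= m /\
  (forall i j, i < n -> j < n -> c i = c j -> i = j) /\
  (forall a b, a < m -> b < m -> k a = k b -> a = b) /\
  (forall i a, i < n -> a < m -> k a != c i) /\
  (forall i j, i < n -> j < n ->
     adj (c i) (c j) = (j == (i + 1) %% n) || (i == (j + 1) %% n)) /\
  (forall a b, a < m -> b < m -> adj (k a) (k b) = (a != b)) /\
  (forall a i, a < m -> i < n -> adj (k a) (c i) = (i == 0) || (i == 1)).

Definition good_neighbours (H : sgraph) (n : nat) (c : nat -> H) : Prop :=
  forall v : H, (forall i, i < n -> v != c i) ->
  forall i, i < n ->
    adj v (c ((i + n - 1) %% n)) -> adj v (c ((i + 1) %% n)) -> adj v (c i).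

Definition has_good_necklace (H : sgraph) (n m : nat) : Prop :=
  exists (c k : nat -> H), @is_necklace H n m c k /\ @good_neighbours H n c.

(* Main.v *)
Require Import Defs.
From mathcomp Require Import all_boot.
Set Implicit Arguments. Unset Strict Implicit. Unset Printing Implicit Defensive.


Section Basics.
Variable H : sgraph.

Lemma cbip_side (S : {set H}) : is_cbip S ->
  exists X : {set H}, forall x y, x \in S -> y \in S -> adj x y = ((x \in X) != (y \in X)).
Proof.
case/existsP=> X /andP[sub /and5P[_ _ /forallP h1 /forallP h2 /forallP h3]].
exists X => x y xS yS.
case xX: (x \in X); case yX: (y \in X) => /=.
- by apply/negbTE; move: (h1 x); rewrite xX /= => /forallP/(_ y); rewrite yX.
- by move: (h3 x); rewrite xX /= => /forallP/(_ y); rewrite inE yX yS.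
- by rewrite adj_sym; move: (h3 y); rewrite yX /= => /forallP/(_ x); rewrite inE xX xS.
- apply/negbTE; move: (h2 x); rewrite inE xX xS /= => /forallP/(_ y).
  by rewrite inE yX yS.
Qed.

Lemma cbip_tri (S : {set H}) x y z : is_cbip S -> x \in S -> y \in S -> z \in S ->
  adj x z = (adj x y != adj y z).
Proof.
move=> /cbip_side [X hX] xS yS zS; rewrite !hX //.
by case: (x \in X); case: (y \in X); case: (z \in X).
Qed.

Lemma adj_neq (x y : H) : adj x y -> x != y.
Proof. by apply: contraTneq => ->; rewrite adj_irr. Qed.

Lemma cbip3 (a b z : H) : adj z a -> adj z b -> ~~ adj a b -> is_cbip [set a; b; z].
Proof.
move=> za zb ab; apply/existsP; exists [set z].
have za' : a != z by rewrite eq_sym adj_neq.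
have zb' : b != z by rewrite eq_sym adj_neq.
apply/andP; split.
  by rewrite sub1set !inE eqxx !orbT.
apply/and5P; split.
- by apply/set0Pn; exists z; rewrite inE.
- by apply/set0Pn; exists a; rewrite !inE eqxx za'.
- by apply/forallP=> x; apply/implyP; rewrite inE => /eqP->; apply/forallP=> y;
     apply/implyP; rewrite inE => /eqP->; rewrite adj_irr.
- apply/forallP=> x; apply/implyP; rewrite !inE; move=> /andP[xz].
  move=> hx; apply/forallP=> y; apply/implyP; rewrite !inE; move=> /andP[yz hy].
  have ha : x != a -> y != a -> x = b /\ y = b.
    move=> xa ya; move: hx hy; rewrite (negPf xa) (negPf ya) (negPf xz) (negPf yz) /= !orbF.
    by move=> /eqP -> /eqP ->.
  case: (eqVneq x a) => [->|xa]; case: (eqVneq y a) => [->|ya]; rewrite ?adj_irr //.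
  + by move: hy; rewrite (negPf ya) (negPf yz) orbF => /eqP ->.
  + by move: hx; rewrite (negPf xa) (negPf xz) orbF => /eqP ->; rewrite adj_sym.
  + by case: (ha xa ya) => -> ->; rewrite adj_irr.
- apply/forallP=> x; apply/implyP; rewrite inE => /eqP->; apply/forallP=> y;
  apply/implyP; rewrite !inE => /andP[yz].
  case/orP => [/orP[]|] /eqP ye; rewrite ?ye //.
  by rewrite ye eqxx in yz.
Qed.

Lemma ext_bic (S : {set H}) : is_cbip S -> {B : biclique H | S \subset val B}.
Proof.
move=> cS.
pose P := fun T : {set H} => (S \subset T) && is_cbip T.
have PS : P S by rewrite /P subxx cS.
case: (@arg_maxnP _ S P (fun T => #|T|) PS) => T /andP[ST cT] maxT.
have bT : is_biclique T.
  rewrite /is_biclique cT /=; apply/forallP=> T'; apply/implyP=> /andP[TT' cT'].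
  have : #|T'| <= #|T| by apply: maxT; rewrite /P cT' (subset_trans ST TT').
  by rewrite eq_sym eqEcard TT'.
by exists (exist _ T bT).
Qed.


Lemma bic_cbip (v : biclique H) : is_cbip (val v).
Proof. by case: v => S /= /andP[]. Qed.

Lemma kb_adjP (B1 B2 : biclique H) : kb_adj B1 B2 ->
  B1 != B2 /\ exists u w, [/\ adj u w, u \in val B1, u \in val B2, w \in val B1 & w \in val B2].
Proof.
case/andP=> ne /existsP[u /existsP[w /and3P[uw]]]; rewrite !inE => /andP[u1 u2] /andP[w1 w2].
by split=> //; exists u, w.
Qed.

Lemma kb_adjI (B1 B2 : biclique H) u w : B1 != B2 -> adj u w ->
  u \in val B1 -> u \in val B2 -> w \in val B1 -> w \in val B2 -> kb_adj B1 B2.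
Proof.
move=> ne uw u1 u2 w1 w2; rewrite /kb_adj ne /=.
by apply/existsP; exists u; apply/existsP; exists w; rewrite uw !inE u1 u2 w1 w2.
Qed.

Lemma sep (S : {set H}) x y z : is_cbip S -> x \in S -> y \in S -> z \in S ->
  adj z x -> adj z y -> ~~ adj x y.
Proof. by move=> cS xS yS zS zx zy; rewrite (cbip_tri (y:=z) cS) // adj_sym zx zy. Qed.

End Basics.


Section Cyc.
Variables (I : finType) (s p : I -> I).
Hypothesis sK : cancel s p.
Hypothesis pK : cancel p s.
Hypothesis dist : forall i, uniq [:: p (p i); p i; i; s i; s (s i)].

Lemma s_inj : injective s. Proof. exact: can_inj sK. Qed.

Lemma eq_pl x y : (p x == y) = (x == s y).
Proof. by apply/eqP/eqP=> [<-|->]; rewrite ?pK ?sK. Qed.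
Lemma eq_pr x y : (y == p x) = (s y == x).
Proof. by rewrite eq_sym eq_pl eq_sym. Qed.

Lemma dist' i : uniq [:: i; s i; s (s i); s (s (s i)); s (s (s (s i)))].
Proof. by have := dist (s (s i)); rewrite !sK. Qed.

Lemma ne1 i : (s i == i) = false.
Proof. by apply/negbTE; apply: contraTN (dist' i) => /eqP ->; rewrite /= !inE !eqxx ?orbT. Qed.
Lemma ne2 i : (s (s i) == i) = false.
Proof. by apply/negbTE; apply: contraTN (dist' i) => /eqP ->; rewrite /= !inE !eqxx ?orbT. Qed.
Lemma ne3 i : (s (s (s i)) == i) = false.
Proof. by apply/negbTE; apply: contraTN (dist' i) => /eqP ->; rewrite /= !inE !eqxx ?orbT. Qed.
Lemma ne4 i : (s (s (s (s i))) == i) = false.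
Proof. by apply/negbTE; apply: contraTN (dist' i) => /eqP ->; rewrite /= !inE !eqxx ?orbT. Qed.
Lemma ne1' i : (i == s i) = false. Proof. by rewrite eq_sym ne1. Qed.
Lemma ne2' i : (i == s (s i)) = false. Proof. by rewrite eq_sym ne2. Qed.
Lemma ne3' i : (i == s (s (s i))) = false. Proof. by rewrite eq_sym ne3. Qed.
Lemma ne4' i : (i == s (s (s (s i)))) = false. Proof. by rewrite eq_sym ne4. Qed.

Ltac idx := rewrite ?sK ?pK ?eq_pl ?eq_pr ?(inj_eq s_inj) ?ne1 ?ne2 ?ne3 ?ne4 ?ne1' ?ne2' ?ne3' ?ne4' ?eqxx.


Definition gcyc (H : sgraph) (c : I -> H) : Prop :=
  [/\ injective c, (forall i j, adj (c i) (c j) = (j == s i) || (i == s j)) &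
   (forall v, (forall i, v != c i) -> forall i,
       adj v (c (p i)) -> adj v (c (s i)) -> adj v (c i))].

Definition ear (H : sgraph) (c : I -> H) q (x : H) :=
  (forall i, x != c i) /\ (forall i, adj x (c i) = (i == q) || (i == s q)).

Definition pos (H : sgraph) (c : I -> H) r (S : {set H}) :=
  [/\ c r \in S, c (s r) \in S, c (p r) \notin S & c (s (s r)) \notin S].

Section G.
Variables (H : sgraph) (c : I -> H).
Hypothesis hc : gcyc c.

Lemma cinj : injective c. Proof. by case: hc. Qed.
Lemma cadj i j : adj (c i) (c j) = (j == s i) || (i == s j). Proof. by case: hc. Qed.

Lemma cadjs i : adj (c i) (c (s i)). Proof. by rewrite cadj eqxx. Qed.
Lemma cadjp i : adj (c (p i)) (c i). Proof. by rewrite cadj pK eqxx. Qed.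
Lemma cadjs' i : adj (c (s i)) (c i). Proof. by rewrite adj_sym cadjs. Qed.
Lemma cadjp' i : adj (c i) (c (p i)). Proof. by rewrite adj_sym cadjp. Qed.

Lemma GN' v i : adj v (c (p i)) -> adj v (c (s i)) -> (v == c i) || adj v (c i).
Proof.
case: (boolP [exists j, v == c j]) => [/existsP[j /eqP->]|nv].
  rewrite !cadj (inj_eq cinj) pK (inj_eq s_inj); case: (eqVneq j i) => [->|ji].
    by [].
  rewrite orbF /= => h1 /eqP h2; subst j; move: h1; by idx.
case: hc => _ _ gn h1 h2; rewrite gn ?orbT // => j.
by apply: contraNneq nv => ->; apply/existsP; exists j.
Qed.

Lemma star (B : {set H}) i z : is_cbip B -> c (p i) \in B -> c i \in B -> c (s i) \in B ->
  z \in B -> z != c i -> [&& adj z (c i), ~~ adj z (c (p i)) & ~~ adj z (c (s i))].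
Proof.
move=> cB h1 h2 h3 zB zi.
have e1 : adj z (c i) = ~~ adj z (c (p i)).
  by rewrite (cbip_tri (y:=c (p i)) cB) // cadjp; case: adj.
have e2 : adj z (c (s i)) = adj z (c (p i)).
  rewrite (cbip_tri (y:=c (p i)) cB) // cadj; idx; by case: adj.
case a1: (adj z (c (p i))); last by rewrite e1 e2 a1.
by have := GN' a1; rewrite e2 a1 => /(_ isT); rewrite (negPf zi) e1 a1.
Qed.

Lemma star_edge (B : {set H}) i u w : is_cbip B -> c (p i) \in B -> c i \in B -> c (s i) \in B ->
  u \in B -> w \in B -> adj u w -> (u == c i) || (w == c i).
Proof.
move=> cB h1 h2 h3 uB wB uw.
case: (eqVneq u (c i)) => // ui; case: (eqVneq w (c i)) => // wi.
have /andP[a1 _] := star cB h1 h2 h3 uB ui.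
have /andP[a2 _] := star cB h1 h2 h3 wB wi.
by move: uw; rewrite (cbip_tri (y:=c i) cB) // a1 adj_sym a2.
Qed.

Lemma cyc_in (S : {set H}) r j : is_cbip S -> pos c r S -> c j \in S -> (j == r) || (j == s r).
Proof.
move=> cS [h1 h2 h3 h4] hj.
have := cbip_tri (y:=c r) cS hj h1 h2; rewrite cadjs !cadj.
case/boolP: (j == r) => //= jr; case/boolP: (j == s r) => //= jsr.
rewrite (inj_eq s_inj) eq_sym (negPf jr) /= orbF.
case: (eqVneq r (s j)) => [e|_] /=.
  have e' : j = p r by rewrite e sK.
  by move: hj; rewrite e' (negPf h3).
by move=> /eqP e; rewrite -e hj in h4.
Qed.


Lemma ear_cbip_plus x q : ear c q x -> is_cbip [set x; c (s (s q)); c (s q)].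
Proof.
case=> _ ex; apply: cbip3; first by rewrite adj_sym ex eqxx orbT.
  by rewrite cadjs.
by rewrite ex; idx.
Qed.

Lemma ear_cbip_minus x q : ear c q x -> is_cbip [set x; c (p q); c q].
Proof.
case=> _ ex; apply: cbip3; first by rewrite adj_sym ex eqxx.
  by rewrite adj_sym cadjp.
by rewrite ex; idx.
Qed.

Lemma gen_plus x q (S : {set H}) : is_cbip S -> ear c q x ->
  [set x; c (s (s q)); c (s q)] \subset S -> pos c (s q) S.
Proof.
move=> cS [_ ex] /subsetP sub.
have xS : x \in S by apply: sub; rewrite !inE eqxx.
have h1 : c (s q) \in S by apply: sub; rewrite !inE eqxx !orbT.
have h2 : c (s (s q)) \in S by apply: sub; rewrite !inE eqxx !orbT.
split; rewrite ?sK //.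
  apply/negP=> h; have := cbip_tri (y:=c (s q)) cS xS h1 h.
  by rewrite cadjs' !ex; idx.
apply/negP=> h; have := cbip_tri (y:=c (s (s q))) cS xS h2 h.
by rewrite !ex cadjs; idx.
Qed.

Lemma gen_minus x q (S : {set H}) : is_cbip S -> ear c q x ->
  [set x; c (p q); c q] \subset S -> pos c (p q) S.
Proof.
move=> cS [_ ex] /subsetP sub.
have xS : x \in S by apply: sub; rewrite !inE eqxx.
have h1 : c (p q) \in S by apply: sub; rewrite !inE eqxx !orbT.
have h2 : c q \in S by apply: sub; rewrite !inE eqxx !orbT.
split; rewrite ?pK //.
  apply/negP=> h; have := cbip_tri (y:=c (p q)) cS xS h1 h.
  by rewrite cadjp' !ex; idx.
apply/negP=> h; have := cbip_tri (y:=c q) cS xS h2 h.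
by rewrite !ex cadjs; idx.
Qed.

Lemma noskipH (g h : {set H}) q : is_cbip g -> is_cbip h ->
  c q \in g -> c (s q) \in g -> c (p q) \in h -> c (s (s q)) \in h ->
  c q \notin h -> c (s q) \notin h ->
  forall a b, a \in g -> a \in h -> b \in g -> b \in h -> adj a b -> False.
Proof.
move=> cg ch g1 g2 h1 h2 h3 h4.
have one y : y \in g -> y \in h -> adj y (c (p q)) -> False.
  move=> yg yh yp.
  have yq : y != c q by apply: contraNneq h3 => <-.
  have ysq : y != c (s q) by apply: contraNneq h4 => <-.
  have e1 : adj y (c (s (s q))).
    by rewrite (cbip_tri (y:=c (p q)) ch) // yp cadj; idx.
  have e2 : adj y (c (s q)) = ~~ adj y (c q).
    by rewrite (cbip_tri (y:=c q) cg) // cadjs; case: adj.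
  case a1: (adj y (c q)).
    have := @GN' y (s q); rewrite sK a1 e1 => /(_ isT isT).
    by rewrite (negPf ysq) e2 => /negP; apply; exact: a1.
  have := @GN' y q; rewrite yp e2 a1 => /(_ isT isT).
  by rewrite (negPf yq).
move=> a b ag ah bg bh ab.
have := cbip_tri (y:=c (p q)) ch ah h1 bh; rewrite ab.
case a1: (adj a (c (p q))); first by have := one a ag ah a1.
move=> hb; apply: (one b bg bh); by rewrite adj_sym; move: hb; case: adj.
Qed.

Section KB.
Variable D : I -> KBe H.
Hypothesis hD : forall i, [set c (p i); c (s i); c i] \subset val (D i).

Lemma Dp i : c (p i) \in val (D i). Proof. by apply: (subsetP (hD i)); rewrite !inE eqxx. Qed.
Lemma Dc i : c i \in val (D i). Proof. by apply: (subsetP (hD i)); rewrite !inE eqxx !orbT. Qed.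
Lemma Ds i : c (s i) \in val (D i). Proof. by apply: (subsetP (hD i)); rewrite !inE eqxx !orbT. Qed.
Lemma Dcb i : is_cbip (val (D i)). Proof. exact: bic_cbip. Qed.

Lemma Dedge i u w : u \in val (D i) -> w \in val (D i) -> adj u w -> (u == c i) || (w == c i).
Proof. exact: (star_edge (Dcb i) (Dp i) (Dc i) (Ds i)). Qed.

Lemma edge_lemma (v : KBe H) j : adj v (D j) ->
  exists y, [/\ c j \in val v, y \in val v, y \in val (D j), y != c j & adj (c j) y].
Proof.
move=> /kb_adjP [_ [u [w [uw u1 u2 w1 w2]]]].
case/orP: (Dedge u2 w2 uw) => /eqP e; subst.
  by exists w; split=> //; rewrite eq_sym adj_neq.
by exists u; split=> //; rewrite ?adj_neq // adj_sym.
Qed.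

Lemma D_inj : injective D.
Proof.
move=> i j e; apply/eqP/negPn/negP=> ij.
have h1 := @Dedge j (c (p i)) (c i); rewrite -e in h1.
have h2 := @Dedge j (c i) (c (s i)); rewrite -e in h2.
move: (h1 (Dp i) (Dc i) (cadjp i)) (h2 (Dc i) (Ds i) (cadjs i)).
rewrite !(inj_eq cinj) (negPf ij) orbF /= => /eqP <- /eqP e2.
by move: e2 => /eqP; idx.
Qed.


Lemma DpS i : c i \in val (D (s i)). Proof. by have := Dp (s i); rewrite sK. Qed.
Lemma DsP i : c i \in val (D (p i)). Proof. by have := Ds (p i); rewrite pK. Qed.

Lemma D_neq i j : (D i != D j) = (i != j).
Proof. by rewrite (inj_eq D_inj). Qed.

Lemma D_adj i j : adj (D i) (D j) = (j == s i) || (i == s j).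
Proof.
apply/idP/idP.
  move=> /kb_adjP [ne [u [w [uw u1 u2 w1 w2]]]].
  have ij : i != j by apply: contraNneq ne => ->.
  case/orP: (Dedge u1 w1 uw) => /eqP ei; case/orP: (Dedge u2 w2 uw) => /eqP ej; subst.
  - by move/cinj: ej => e; rewrite e eqxx in ij.
  - by rewrite cadj in uw.
  - by rewrite cadj orbC in uw.
  - by move/cinj: ej => e; rewrite e eqxx in ij.
case/orP=> /eqP ->.
  apply: (@kb_adjI _ _ _ (c i) (c (s i))); rewrite ?D_neq ?cadjs ?Dc ?Ds ?DpS //; by idx.
apply: (@kb_adjI _ _ _ (c (s j)) (c j)); rewrite ?D_neq ?cadjs' ?Dc ?Ds ?DpS //; by idx.
Qed.

Lemma D_gn (v : KBe H) : (forall i, v != D i) -> forall i,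
  adj v (D (p i)) -> adj v (D (s i)) -> adj v (D i).
Proof.
move=> nv i a1 a2.
have [y [h1 yv yD yne hy]] := edge_lemma a1.
have [z [h2 _ _ _ _]] := edge_lemma a2.
have cv := bic_cbip v.
have e1 : adj y (c (s i)).
  rewrite (cbip_tri (y:=c (p i)) cv) // adj_sym hy cadj; by idx.
have := star (Dcb (p i)) (Dp (p i)) (Dc (p i)) (Ds (p i)) yD yne; rewrite pK => /and3P[_ _ ny].
have := @GN' y i; rewrite adj_sym hy e1 (negPf ny) orbF => /(_ isT isT) /eqP ey; subst y.
by apply: (@kb_adjI _ _ _ (c (p i)) (c i) (nv i)); rewrite ?cadjp ?Dp ?Dc.
Qed.

Lemma gcycD : gcyc D.
Proof. split; [exact: D_inj | exact: D_adj | exact: D_gn]. Qed.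


Lemma ear_KB (S : KBe H) r : pos c r (val S) -> ear D r S.
Proof.
move=> ps; have cS := bic_cbip S.
have cin j : c j \in val S -> (j == r) || (j == s r) by apply: cyc_in.
case: (ps) => [r1 r2 _ _].
have nD : forall i, S != D i.
  move=> i; apply/eqP => eS.
  have := cin i; rewrite eS Dc => /(_ isT) /orP[] /eqP ei; subst i.
    by have := cin (p r); rewrite eS Dp => /(_ isT); idx.
  by have := cin (s (s r)); rewrite eS Ds => /(_ isT); idx.
split=> // i; apply/idP/idP.
  by case/edge_lemma=> [y [h _ _ _ _]]; apply: cin.
case/orP=> /eqP ->.
  by apply: (@kb_adjI _ _ _ (c r) (c (s r)) (nD r)); rewrite ?cadjs ?Dc ?Ds.
by apply: (@kb_adjI _ _ _ (c r) (c (s r)) (nD (s r))); rewrite ?cadjs ?Dc ?DpS.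
Qed.

End KB.
End G.

Section G2.
Ltac fin hc hD := first [done | exact: (cadjp hc _) | exact: (cadjs hc _) | exact: (Dp hD _)
  | exact: (Dc hD _) | exact: (Ds hD _) | exact: (DpS hD _) | exact: (DsP hD _)].

Variables (H : sgraph) (c : I -> H).
Hypothesis hc : gcyc c.
Variable D : I -> KBe H.
Hypothesis hD : forall i, [set c (p i); c (s i); c i] \subset val (D i).

Lemma noskipKB (X Y : {set KBe H}) q : is_cbip X -> is_cbip Y -> pos D (p q) X -> pos D (s q) Y ->
  forall u w, u \in X -> u \in Y -> w \in X -> w \in Y -> adj u w -> False.
Proof.
move=> cX cY pX pY.
have gD := gcycD hc hD.
case: (pX) => x1 x2 x3 x4; rewrite pK in x2 x4.
case: (pY) => y1 y2 y3 y4; rewrite sK in y3.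
have off t : t \in X -> t \in Y -> forall j, t != D j.
  move=> tX tY j; apply/eqP => e; subst t.
  have := cyc_in gD cX pX tX; have := cyc_in gD cY pY tY; rewrite pK.
  by case/orP=> /eqP ->; idx.
have parX t : t \in X -> adj t (D q) = ~~ adj t (D (p q)).
  by move=> tX; rewrite (cbip_tri (y:=D (p q)) cX) // (cadjp gD); case: adj.
have parY t : t \in Y -> adj t (D (s (s q))) = ~~ adj t (D (s q)).
  by move=> tY; rewrite (cbip_tri (y:=D (s q)) cY) // (cadjs gD); case: adj.
have sub t : t \in X -> t \in Y -> adj t (D q) -> adj t (D (s q)).
  move=> tX tY tq; apply/negPn/negP => ntq.
  have := GN' gD (v:=t) (i:=s q); rewrite sK tq parY // => /(_ isT ntq) /orP[].
    by move=> e; move: (off t tX tY (s q)); rewrite e.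
  by move=> e; move: ntq; rewrite e.
have main g h : g \in X -> g \in Y -> h \in X -> h \in Y -> adj g h ->
    adj g (D q) -> False.
  move=> gX gY hX hY gh gq.
  have gsq := sub g gX gY gq.
  have hq : ~~ adj h (D q).
    by have := cbip_tri (y:=D q) cX gX x2 hX; rewrite gh gq (adj_sym _ (D q)); case: adj.
  have hpq : adj h (D (p q)) by move: (parX h hX); rewrite (negPf hq); case: adj.
  have hsq : ~~ adj h (D (s q)).
    by have := cbip_tri (y:=D (s q)) cY gY y1 hY; rewrite gh gsq (adj_sym _ (D (s q))); case: adj.
  have hssq : adj h (D (s (s q))) by rewrite parY // hsq.
  have gpq : ~~ adj g (D (p q)) by rewrite -parX.
  have gssq : ~~ adj g (D (s (s q))) by rewrite parY // gsq.
  have [_ [g1 _ _ _ _]] := edge_lemma hc hD gq.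
  have [_ [g2 _ _ _ _]] := edge_lemma hc hD gsq.
  have [_ [h1 _ _ _ _]] := edge_lemma hc hD hpq.
  have [_ [h2 _ _ _ _]] := edge_lemma hc hD hssq.
  have g3 : c (p q) \notin val g.
    apply/negP => gp; move/negP: gpq; apply.
    by apply: (@kb_adjI _ _ _ (c (p q)) (c q) (off g gX gY (p q))); fin hc hD.
  have g4 : c (s (s q)) \notin val g.
    apply/negP => gp; move/negP: gssq; apply.
    by apply: (@kb_adjI _ _ _ (c (s q)) (c (s (s q))) (off g gX gY (s (s q)))); fin hc hD.
  have h3 : c q \notin val h.
    apply/negP => gp; move/negP: hq; apply.
    by apply: (@kb_adjI _ _ _ (c (p q)) (c q) (off h hX hY q)); fin hc hD.
  have h4 : c (s q) \notin val h.
    apply/negP => gp; move/negP: hsq; apply.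
    by apply: (@kb_adjI _ _ _ (c (s q)) (c (s (s q))) (off h hX hY (s q))); fin hc hD.
  have [_ [a [b [ab a1 a2 b1 b2]]]] := kb_adjP gh.
  exact: (noskipH hc (bic_cbip g) (bic_cbip h) g1 g2 h1 h2 h3 h4 a1 a2 b1 b2 ab).
move=> u w uX uY wX wY uw.
case uq: (adj u (D q)); first exact: (main u w).
apply: (main w u) => //; first by rewrite adj_sym.
by have := cbip_tri (y:=D q) cX uX x2 wX; rewrite uw uq (adj_sym _ (D q)); case: adj.
Qed.

End G2.

Definition extd (H : sgraph) (d : biclique H) (S : {set H}) : biclique H :=
  odflt d [pick B : biclique H | S \subset val B].

Lemma extdP (H : sgraph) (d : biclique H) (S : {set H}) : is_cbip S -> S \subset val (extd d S).
Proof.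
move=> cS; rewrite /extd; case: pickP => [B hB|none] //=.
by have [B hB] := ext_bic cS; rewrite none in hB.
Qed.

Lemma step (H : sgraph) (c : I -> H) : gcyc c ->
  {D : I -> KBe H | gcyc D /\ forall i, [set c (p i); c (s i); c i] \subset val (D i)}.
Proof.
move=> hc.
have cb i : is_cbip [set c (p i); c (s i); c i].
  by apply: cbip3; rewrite ?(cadjp' hc) ?(cadjs hc) // (cadj hc); idx.
exists (fun i => sval (ext_bic (cb i))).
have hD i : [set c (p i); c (s i); c i] \subset val (sval (ext_bic (cb i))).
  exact: (svalP (ext_bic (cb i))).
by split; [exact: (gcycD hc hD) | exact: hD].
Qed.

Lemma insub3 (H : sgraph) (B : biclique H) (x y z : H) :
  [set x; y; z] \subset val B -> [/\ x \in val B, y \in val B & z \in val B].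
Proof. by move/subsetP=> h; split; apply: h; rewrite !inE eqxx ?orbT. Qed.

Lemma chain (G : sgraph) (c0 : I -> G) q0 m (k : nat -> G) : gcyc c0 ->
  (forall a, a < m -> ear c0 q0 (k a)) ->
  (forall a b, a < m -> b < m -> a != b -> adj (k a) (k b)) -> 0 < m ->
  exists (c3 : I -> KBe (KBe (KBe G))) (k3 : nat -> KBe (KBe (KBe G))),
   [/\ gcyc c3, (forall a, a < m.+1 -> ear c3 (s q0) (k3 a)) &
       (forall a b, a < m.+1 -> b < m.+1 -> adj (k3 a) (k3 b) = (a != b))].
Proof.
move=> hc0 ek kk m0.
have [D1 [g1 h1]] := step hc0.
pose A : nat -> KBe G := fun a => extd (D1 q0) [set k a; c0 (p q0); c0 q0].
have sA a : a < m -> [set k a; c0 (p q0); c0 q0] \subset val (A a).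
  by move=> am; apply: extdP; exact: (ear_cbip_minus hc0 (ek a am)).
have pA a : a < m -> pos c0 (p q0) (val (A a)).
  by move=> am; apply: (gen_minus hc0 (bic_cbip _) (ek a am) (sA a am)).
have eA a : a < m -> ear D1 (p q0) (A a).
  by move=> am; apply: (ear_KB hc0 h1 (pA a am)).
have nA a b : a < m -> b < m -> a != b -> A a != A b.
  move=> am bm ab; apply/eqP => e.
  have [ka _ cq] := insub3 (sA a am).
  have [kb _ _] := insub3 (sA b bm); rewrite -e in kb.
  have := sep (bic_cbip (A a)) ka kb cq.
  case: (ek a am) => _ ea; case: (ek b bm) => _ eb.
  rewrite adj_sym ea eqxx adj_sym eb eqxx /= => /(_ isT isT).
  by move/negP; apply; apply: kk.
have adjA a b : a < m -> b < m -> a != b -> @adj (KBe G) (A a) (A b).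
  move=> am bm ab; case: (pA a am) => a1 a2 _ _; case: (pA b bm) => b1 b2 _ _.
  rewrite pK in a2 b2.
  exact: (kb_adjI (nA a b am bm ab) (cadjp hc0 q0) a1 b1 a2 b2).
pose A' : KBe G := extd (D1 q0) [set k 0; c0 (s (s q0)); c0 (s q0)].
have sA' : [set k 0; c0 (s (s q0)); c0 (s q0)] \subset val A'.
  by apply: extdP; exact: (ear_cbip_plus hc0 (ek 0 m0)).
have pA' : pos c0 (s q0) (val A') by apply: (gen_plus hc0 (bic_cbip _) (ek 0 m0) sA').
have eA' : ear D1 (s q0) A' by apply: (ear_KB hc0 h1 pA').
have [D2 [g2 h2]] := step g1.
pose X : nat -> KBe (KBe G) := fun a => extd (D2 q0) [set A a; D1 (s (s (p q0))); D1 (s (p q0))].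
have sX a : a < m -> [set A a; D1 (s (s (p q0))); D1 (s (p q0))] \subset val (X a).
  by move=> am; apply: extdP; exact: (ear_cbip_plus g1 (eA a am)).
have pX a : a < m -> pos D1 q0 (val (X a)).
  by move=> am; have := gen_plus g1 (bic_cbip _) (eA a am) (sX a am); rewrite pK.
have eX a : a < m -> ear D2 q0 (X a).
  by move=> am; apply: (ear_KB g1 h2 (pX a am)).
have nX a b : a < m -> b < m -> a != b -> X a != X b.
  move=> am bm ab; apply/eqP => e.
  have [xa _ cq] := insub3 (sX a am).
  have [xb _ _] := insub3 (sX b bm); rewrite -e in xb.
  have := sep (bic_cbip (X a)) xa xb cq.
  case: (eA a am) => _ ea; case: (eA b bm) => _ eb.
  rewrite adj_sym ea eqxx orbT adj_sym eb eqxx orbT /= => /(_ isT isT).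
  by move/negP; apply; apply: adjA.
have adjX a b : a < m -> b < m -> a != b -> @adj (KBe (KBe G)) (X a) (X b).
  move=> am bm ab; case: (pX a am) => a1 a2 _ _; case: (pX b bm) => b1 b2 _ _.
  exact: (kb_adjI (nX a b am bm ab) (cadjs g1 q0) a1 b1 a2 b2).
pose Y : KBe (KBe G) := extd (D2 q0) [set A'; D1 (s (s (s q0))); D1 (s (s q0))].
have sY : [set A'; D1 (s (s (s q0))); D1 (s (s q0))] \subset val Y.
  by apply: extdP; exact: (ear_cbip_plus g1 eA').
have pY : pos D1 (s (s q0)) (val Y) by apply: (gen_plus g1 (bic_cbip _) eA' sY).
have eY : ear D2 (s (s q0)) Y by apply: (ear_KB g1 h2 pY).
have [D3 [g3 h3]] := step g2.
pose Z : nat -> KBe (KBe (KBe G)) := fun a => extd (D3 q0) [set X a; D2 (s (s q0)); D2 (s q0)].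
have sZ a : a < m -> [set X a; D2 (s (s q0)); D2 (s q0)] \subset val (Z a).
  by move=> am; apply: extdP; exact: (ear_cbip_plus g2 (eX a am)).
have pZ a : a < m -> pos D2 (s q0) (val (Z a)).
  by move=> am; apply: (gen_plus g2 (bic_cbip _) (eX a am) (sZ a am)).
have eZ a : a < m -> ear D3 (s q0) (Z a).
  by move=> am; apply: (ear_KB g2 h3 (pZ a am)).
pose W : KBe (KBe (KBe G)) := extd (D3 q0) [set Y; D2 (p (s (s q0))); D2 (s (s q0))].
have sW : [set Y; D2 (p (s (s q0))); D2 (s (s q0))] \subset val W.
  by apply: extdP; exact: (ear_cbip_minus g2 eY).
have pW : pos D2 (s q0) (val W).
  by have := gen_minus g2 (bic_cbip _) eY sW; rewrite sK.
have eW : ear D3 (s q0) W by apply: (ear_KB g2 h3 pW).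
have nZ a b : a < m -> b < m -> a != b -> Z a != Z b.
  move=> am bm ab; apply/eqP => e.
  have [xa _ cq] := insub3 (sZ a am).
  have [xb _ _] := insub3 (sZ b bm); rewrite -e in xb.
  have := sep (bic_cbip (Z a)) xa xb cq.
  case: (eX a am) => _ ea; case: (eX b bm) => _ eb.
  rewrite adj_sym ea eqxx orbT adj_sym eb eqxx orbT /= => /(_ isT isT).
  by move/negP; apply; apply: adjX.
have nW a : a < m -> W != Z a.
  move=> am; apply/eqP => e.
  have [xa _ cq] := insub3 (sZ a am).
  have [yW _ _] := insub3 sW; rewrite e in yW.
  have := cbip_tri (bic_cbip (Z a)) xa cq yW.
  case: (eX a am) => _ ea; case: eY => _ eb.
  rewrite ea (adj_sym (D2 (s q0)) Y) eb; idx => /= hXY.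
  have [_ [u [w [uw u1 u2 w1 w2]]]] := kb_adjP hXY.
  have pX' : pos D1 (p (s q0)) (val (X a)) by rewrite sK; apply: pX.
  exact: (noskipKB hc0 h1 (bic_cbip _) (bic_cbip _) pX' pY u1 u2 w1 w2 uw).
pose k3 a := if a < m then Z a else W.
exists D3, k3; split=> //.
  by move=> a _; rewrite /k3; case: ifP => am; [apply: eZ | apply: eW].
have memb a : a < m.+1 -> D2 (s q0) \in val (k3 a) /\ D2 (s (s q0)) \in val (k3 a).
  rewrite /k3 => _; case: ifP => am.
    by case: (pZ a am).
  by case: pW.
move=> a b am bm; case: (eqVneq a b) => [->|ab]; first by rewrite adj_irr.
have ne : k3 a != k3 b.
  rewrite /k3; case: ifP => ha; case: ifP => hb.
  - exact: nZ.
  - by rewrite eq_sym nW.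
  - exact: nW.
  - have ea : a = m by apply/eqP; rewrite eqn_leq -ltnS am leqNgt ha.
    have eb : b = m by apply/eqP; rewrite eqn_leq -ltnS bm leqNgt hb.
    by rewrite ea eb eqxx in ab.
have [ma1 ma2] := memb a am; have [mb1 mb2] := memb b bm.
exact: (kb_adjI ne (cadjs g2 (s q0)) ma1 mb1 ma2 mb2).
Qed.

End Cyc.


Section Ord.
Variable n : nat.
Hypothesis n5 : 5 <= n.

Lemma n0 : 0 < n. Proof. by apply: leq_trans n5. Qed.

Lemma valS k (i : 'I_n) : val (iter k (@ordS n) i) = (i + k) %% n.
Proof.
elim: k => [|k IH] /=; first by rewrite addn0 modn_small.
by rewrite IH -addn1 modnDml addn1 addnS.
Qed.

Lemma iter_eq (r : 'I_n) a b : (iter a (@ordS n) r == iter b (@ordS n) r) = (a %% n == b %% n).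
Proof. by rewrite -val_eqE /= !valS eqn_modDl. Qed.

Lemma dist_ord (i : 'I_n) :
  uniq [:: ord_pred (ord_pred i); ord_pred i; i; ordS i; ordS (ordS i)].
Proof.
set j := ord_pred (ord_pred i).
have ei : i = ordS (ordS j) by rewrite /j !ord_predK.
rewrite ei !ordSK.
have -> : [:: j; ordS j; ordS (ordS j); ordS (ordS (ordS j)); ordS (ordS (ordS (ordS j)))]
  = map (fun k => iter k (@ordS n) j) [:: 0; 1; 2; 3; 4] by [].
rewrite (map_inj_in_uniq (s := [:: 0; 1; 2; 3; 4])) //.
move=> a b ha hb /eqP; rewrite iter_eq !modn_small; first by move/eqP.
- by move: hb; rewrite !inE => /or4P[|||/orP[]] /eqP ->; apply: leq_trans n5.
- by move: ha; rewrite !inE => /or4P[|||/orP[]] /eqP ->; apply: leq_trans n5.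
Qed.


Definition q0 : 'I_n := Ordinal n0.

Lemma to_cyc (H : sgraph) (c : nat -> H) k m :
  @is_necklace H n m c k -> @good_neighbours H n c ->
  [/\ gcyc (@ordS n) (@ord_pred n) (fun i : 'I_n => c i),
      forall a, a < m -> ear (@ordS n) (fun i : 'I_n => c i) q0 (k a)
    & forall a b, a < m -> b < m -> a != b -> adj (k a) (k b)].
Proof.
move=> [_ [_ [ci [ki [kc [cadj [kadj kcadj]]]]]]] gn.
split.
- split.
  + by move=> i j /ci e; apply: val_inj; apply: e.
  + by move=> i j; rewrite cadj // -!val_eqE /= !addn1.
  + move=> v hv i h1 h2; apply: (gn v _ i (ltn_ord i)).
    * by move=> j jn; apply: (hv (Ordinal jn)).
    * by move: h1; rewrite /= subn1.
    * by move: h2; rewrite /= addn1.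
- move=> a am; split; first by move=> i; apply: kc.
  by move=> i; rewrite kcadj // -!val_eqE /= modn_small // (leq_trans _ n5).
- by move=> a b am bm ab; rewrite kadj.
Qed.

Lemma from_cyc (H : sgraph) (c : 'I_n -> H) (r : 'I_n) m (k : nat -> H) : 0 < m ->
  gcyc (@ordS n) (@ord_pred n) c -> (forall a, a < m -> ear (@ordS n) c r (k a)) ->
  (forall a b, a < m -> b < m -> adj (k a) (k b) = (a != b)) -> has_good_necklace H n m.
Proof.
move=> m0 [cinj cadj cgn] ek kk.
pose x j := iter j (@ordS n) r.
have xS j : @ordS n (x j) = x j.+1 by [].
have xeq i j : i < n -> j < n -> (x i == x j) = (i == j).
  by move=> hi hj; rewrite /x iter_eq !modn_small.
have n1 : 1 < n by apply: leq_trans n5.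
exists (fun j => c (x j)), k; split; last first.
  move=> v hv i hi h1 h2.
  have hv' t : v != c t.
    have -> : t = x ((t + n - r) %% n).
      apply: val_inj; rewrite /x valS modnDmr addnBA; last by apply: ltnW; apply: leq_trans (ltn_ord r) (leq_addl _ _).
      by rewrite addnC addnK modnDr modn_small.
    by apply: hv; rewrite ltn_mod n0.
  have e1 : x ((i + 1) %% n) = @ordS n (x i).
    by apply/eqP; rewrite xS /x iter_eq modn_mod addn1.
  have e2 : x ((i + n - 1) %% n) = @ord_pred n (x i).
    apply: (@ordS_inj n); rewrite ord_predK xS; apply/eqP; rewrite /x iter_eq.
    by rewrite -addn1 modnDml subnK ?modnDr // addn_gt0 n0 orbT.
  rewrite e1 in h2; rewrite e2 in h1; exact: cgn.
split; first exact: leq_trans n5.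
split=> //.
split; first by move=> i j hi hj /cinj /eqP; rewrite xeq // => /eqP.
split.
  move=> a b am bm e; apply/eqP; apply/negPn/negP => ab.
  by have := kk a b am bm; rewrite e adj_irr (negPf ab).
split; first by move=> i a _ am; case: (ek a am).
split.
  move=> i j hi hj; rewrite cadj !xS /x !iter_eq (modn_small hi) (modn_small hj).
  by rewrite !addn1.
split; first by move=> a b am bm; apply: kk.
move=> a i am hi; case: (ek a am) => _ ->.
have -> : r = x 0 by [].
rewrite xS !xeq //; try exact: n1; exact: ltnW.
Qed.

End Ord.

Theorem mainTheorem10 (G : sgraph) (n m : nat) :
  5 <= n -> 1 <= m -> has_good_necklace G n m ->
  (exists m', m < m' /\ has_good_necklace (KBe_iter 2 G) n m') \/
  (exists m', m < m' /\ has_good_necklace (KBe_iter 3 G) n m').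
Proof.
move=> n5 m1 [c [k [hn hg]]]; right; exists m.+1; split => //.
have [hc ek kk] := to_cyc n5 hn hg.
have [c3 [k3 [h3 e3 a3]]] := chain (@ordSK n) (@ord_predK n) (dist_ord n5) hc ek kk m1.
exact: (from_cyc n5 (ltn0Sn m) h3 e3 a3).
Qed.
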